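(* Let $\overline{\mathbb{R}}=\mathbb{R}\cup\{-\infty\}$, and let $A\in\overline{\mathbb{R}}^{n\times m}$, $B\in\overline{\mathbb{R}}^{n\times k}$, $C\in\overline{\mathbb{R}}^{k\times m}$. Let $N=\max_{i\in[n],\,j\in[m]}\max\bigl\{A_{ij},\ \max_{1\le d\le k}\{B_{id}+C_{dj}\}\bigr\}$ and $M=\exp\{N\}$. If $\|A-B\otimes C\|_F^2\le\lambda$, then $\|\exp\{A\}-\exp\{B\}\boxtimes\exp\{C\}\|_F^2\le M^2\lambda$.
   Context: The tropical (max-plus) product of $B\in\overline{\mathbb{R}}^{n\times k}$ and $C\in\overline{\mathbb{R}}^{k\times m}$ is $(B\otimes C)_{ij}=\max_{s=1}^{k}\{B_{is}+C_{sj}\}$. The max-times (subtropical) product of nonnegative matrices $X\in[0,\infty)^{n\times k}$, $Y\in[0,\infty)^{k\times m}$ is $(X\boxtimes Y)_{ij}=\max_{s=1}^k X_{is}Y_{sj}$. $\exp\{\cdot\}$ applied to a matrix acts entrywise, with the convention $\exp(-\infty)=0$. $\|\cdot\|_F$ is the Frobenius norm and $[n]=\{1,\dots,n\}$. *)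

(* Defs.v *)
From mathcomp Require Import all_boot all_order all_algebra.
From mathcomp Require Import all_classical all_reals.
From mathcomp Require Import constructive_ereal ereal.
From mathcomp Require Import sequences exp.
Set Implicit Arguments. Unset Strict Implicit. Unset Printing Implicit Defensive.
Import Order.TTheory GRing.Theory Num.Theory.
Local Open Scope ring_scope.

(* Rbar = R ∪ {-∞}: [Some x] is the real x, [None] is -∞. *)
Definition rbar (R : realType) := option R.

Section Defs.
Variable R : realType.

Definition rbar_max (a b : rbar R) : rbar R :=
  match a, b with
  | None, _ => b
  | _, None => a
  | Some x, Some y => Some (Num.max x y)
  end.

Definition rbar_add (a b : rbar R) : rbar R :=
  match a, b with
  | Some x, Some y => Some (x + y)
  | _, _ => None
  end.

Definition rbar_exp (a : rbar R) : R :=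
  match a with Some x => expR x | None => 0 end.

Definition tropical_mul n k m (B : 'M[rbar R]_(n, k)) (C : 'M[rbar R]_(k, m))
  : 'M[rbar R]_(n, m) :=
  \matrix_(i, j) \big[rbar_max/None]_(s < k) rbar_add (B i s) (C s j).

(* max-times (subtropical) product of nonnegative matrices
   (max with neutral 0 is the ordinary max since entries are >= 0) *)
Definition maxtimes_mul n k m (X : 'M[R]_(n, k)) (Y : 'M[R]_(k, m)) : 'M[R]_(n, m) :=
  \matrix_(i, j) \big[Num.max/0]_(s < k) (X i s * Y s j).

Definition mexp n m (A : 'M[rbar R]_(n, m)) : 'M[R]_(n, m) := map_mx rbar_exp A.

Definition rbar_sqdiff (a b : rbar R) : \bar R :=
  match a, b with
  | Some x, Some y => ((x - y) ^+ 2)%:E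
  | None, None => 0%E
  | _, _ => +oo%E
  end.

Definition frob_sq_diff_rbar n m (A B : 'M[rbar R]_(n, m)) : \bar R :=
  (\sum_(i < n) \sum_(j < m) rbar_sqdiff (A i j) (B i j))%E.

Definition frob_sq n m (X : 'M[R]_(n, m)) : R :=
  \sum_(i < n) \sum_(j < m) X i j ^+ 2.

Definition bigN n k m (A : 'M[rbar R]_(n, m)) (B : 'M[rbar R]_(n, k))
  (C : 'M[rbar R]_(k, m)) : rbar R :=
  \big[rbar_max/None]_(i < n) \big[rbar_max/None]_(j < m)
     rbar_max (A i j) (tropical_mul B C i j).

End Defs.

(* Main.v *)
Require Import Defs.
From mathcomp Require Import all_boot all_order all_algebra.
From mathcomp Require Import all_classical all_reals.
From mathcomp Require Import constructive_ereal ereal.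
From mathcomp Require Import sequences exp.
From mathcomp Require Import lra.
Import Order.TTheory GRing.Theory Num.Theory.
Local Open Scope ring_scope.

Section Aux.
Variable R : realType.

Lemma rbar_exp_max (a b : rbar R) :
  rbar_exp (rbar_max a b) = Num.max (rbar_exp a) (rbar_exp b).
Proof.
case: a => [x|]; case: b => [y|] //=.
- case: (leP x y) => h.
  + by rewrite !max_r // ler_expR.
  + by rewrite !max_l ?ler_expR // ltW.
- by rewrite max_l // ltW // expR_gt0.
- by rewrite max_r // ltW // expR_gt0.
- by rewrite maxxx.
Qed.

Lemma rbar_exp_add (a b : rbar R) :
  rbar_exp (rbar_add a b) = rbar_exp a * rbar_exp b.
Proof.
case: a => [x|]; case: b => [y|] //=; by rewrite ?expRD ?mul0r ?mulr0.
Qed.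

Lemma le_bigmax_seq (I : eqType) (r : seq I) (F : I -> R) x :
  x \in r -> F x <= \big[Num.max/0]_(j <- r) F j.
Proof.
elim: r => [|y r IH] //; rewrite big_cons inE; case/orP => [/eqP->|/IH h].
  by rewrite le_max lexx.
by rewrite le_max h orbT.
Qed.

Lemma le_bigmax_ord p (F : 'I_p -> R) x : F x <= \big[Num.max/0]_(j < p) F j.
Proof. by apply: le_bigmax_seq; rewrite mem_index_enum. Qed.

Lemma exp_diff_bound (x y M : R) :
  expR x <= M -> expR y <= M -> (expR x - expR y) ^+ 2 <= M ^+ 2 * (x - y) ^+ 2.
Proof.
wlog yx : x y / y <= x.
  move=> W hx hy; case: (leP y x) => h; first exact: W.
  rewrite -(sqrrN (expR x - _)) -(sqrrN (x - _)) !opprB.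
  by apply: W => //; rewrite ltW.
move=> hx hy.
have Ex := expR_gt0 x.
have F := expR_ge1Dx (y - x).
have eq1 : expR y = expR x * expR (y - x) by rewrite -expRD addrC subrK.
have h0 : 0 <= expR x - expR y by rewrite subr_ge0 ler_expR.
have h1 : expR x - expR y <= expR x * (x - y).
  rewrite eq1; nra.
have h2 : expR x * (x - y) <= M * (x - y) by rewrite ler_wpM2r // subr_ge0.
have h3 := le_trans h1 h2.
move: h0 h3; set u := expR x - expR y; set d := x - y => h0 h3.
rewrite -exprMn; nra.
Qed.

Lemma entry_bound (a t : rbar R) (r M : R) :
  rbar_sqdiff a t = r%:E -> rbar_exp a <= M -> rbar_exp t <= M ->
  (rbar_exp a - rbar_exp t) ^+ 2 <= M ^+ 2 * r.
Proof.
case: a => [x|]; case: t => [y|] //= [<-]; first exact: exp_diff_bound.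
by rewrite subrr expr0n mulr0.
Qed.

End Aux.

Theorem theorem4 (R : realType) (n m k : nat)
  (A : 'M[rbar R]_(n, m)) (B : 'M[rbar R]_(n, k)) (C : 'M[rbar R]_(k, m))
  (lambda : R) :
  (frob_sq_diff_rbar A (tropical_mul B C) <= lambda%:E)%E ->
  frob_sq (mexp A - maxtimes_mul (mexp B) (mexp C))
    <= (rbar_exp (bigN A B C)) ^+ 2 * lambda.
Proof.
move=> H.
set T := tropical_mul B C.
set M := rbar_exp (bigN A B C).
have hT : forall i j, maxtimes_mul (mexp B) (mexp C) i j = rbar_exp (T i j).
  move=> i j; rewrite /T /tropical_mul /maxtimes_mul !mxE.
  rewrite (big_morph (@rbar_exp R) (@rbar_exp_max R) (erefl (rbar_exp None))).
  by apply: eq_bigr => s _; rewrite !mxE rbar_exp_add.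
have hM : M = \big[Num.max/0]_(i < n) \big[Num.max/0]_(j < m)
              Num.max (rbar_exp (A i j)) (rbar_exp (T i j)).
  rewrite /M /bigN (big_morph (@rbar_exp R) (@rbar_exp_max R) (erefl (rbar_exp None))).
  apply: eq_bigr => i _.
  rewrite (big_morph (@rbar_exp R) (@rbar_exp_max R) (erefl (rbar_exp None))).
  by apply: eq_bigr => j _; rewrite rbar_exp_max.
have bnd : forall i j, Num.max (rbar_exp (A i j)) (rbar_exp (T i j)) <= M.
  move=> i j; rewrite hM.
  apply: le_trans; last exact: (@le_bigmax_ord R _ (fun i => \big[Num.max/0]_(j < m)
              Num.max (rbar_exp (A i j)) (rbar_exp (T i j))) i).
  exact: (@le_bigmax_ord R _ (fun j => Num.max (rbar_exp (A i j)) (rbar_exp (T i j))) j).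
have ge0 : forall a b : rbar R, (0 <= rbar_sqdiff a b)%E.
  by case=> [x|]; case=> [y|] //=; rewrite lee_fin sqr_ge0.
have fin : forall i j, rbar_sqdiff (A i j) (T i j) = (fine (rbar_sqdiff (A i j) (T i j)))%:E.
  move=> i j.
  have le1 : (rbar_sqdiff (A i j) (T i j) <= frob_sq_diff_rbar A T)%E.
    rewrite /frob_sq_diff_rbar (bigD1 i) //=.
    apply: le_trans; last by apply: leeDl; apply: sume_ge0 => i' _; apply: sume_ge0.
    rewrite (bigD1 j) //=.
    by apply: leeDl; apply: sume_ge0.
  move: le1 (ge0 (A i j) (T i j)).
  case: (rbar_sqdiff _ _) => [r| |] //= le1 _.
  have := le_trans le1 H; by rewrite leye_eq.
move: H; rewrite /frob_sq_diff_rbar.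
under eq_bigr => i _ do under eq_bigr => j _ do rewrite fin.
under eq_bigr => i _ do rewrite sumEFin.
rewrite sumEFin lee_fin => H.
apply: le_trans; last exact: (ler_wpM2l (sqr_ge0 M) H).
rewrite /frob_sq mulr_sumr; apply: ler_sum => i _.
rewrite mulr_sumr; apply: ler_sum => j _.
have -> : (mexp A - maxtimes_mul (mexp B) (mexp C)) i j = rbar_exp (A i j) - rbar_exp (T i j).
  have hT' : \big[Num.max/0]_(s < k) (mexp B i s * mexp C s j) = rbar_exp (T i j).
    by rewrite -(hT i j) /maxtimes_mul mxE.
  by rewrite !mxE hT' /T /tropical_mul mxE.
have := bnd i j; rewrite ge_max => /andP[b1 b2].
apply: (@entry_bound R) => //; exact: fin.
Qed.
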